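(* For all positive integers $n$ and $r$ with $n\geqslant r+1$, there exists a proper edge coloring $c: E(K_n)\to\mathbb{R}$ such that $\dim W_c(K_n, r)\geqslant\binom{r+1}{2}$.
   Context: All graphs are finite, simple and undirected; $K_n$ is the complete graph on $n$ vertices. For a positive integer $r$ and a graph $G$ with a proper edge coloring $c: E(G)\to\mathbb{R}$, $W_c(G,r)$ is the real vector space of all functions $\phi: E(G)\to\mathbb{R}$ for which there exist real polynomials $\{P_v(x)\}_{v\in V(G)}$ with $\deg P_v\leqslant r-1$ for every vertex $v$ and $P_u(c(uv))=P_v(c(uv))=\phi(uv)$ for every edge $uv\in E(G)$. *)

(* Defs.v *)
From HB Require Import structures.
From mathcomp Require Import all_boot all_order all_algebra.
From mathcomp Require Import reals.
Set Implicit Arguments. Unset Strict Implicit. Unset Printing Implicit Defensive.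
Import Order.TTheory GRing.Theory Num.Theory.
Local Open Scope ring_scope.

Definition Kedge (n : nat) := {e : {set 'I_n} | #|e| == 2%N}.

Definition proper_coloring (R : realType) (n : nat) (c : Kedge n -> R) : Prop :=
  forall e f : Kedge n, e <> f -> (val e :&: val f != set0) -> c e <> c f.

(* W_c(K_n, r): functions phi on edges such that there are polynomials P_v of
   degree <= r-1 (i.e. size <= r) with P_u(c(uv)) = P_v(c(uv)) = phi(uv). *)
Definition inW (R : realType) (n r : nat) (c : Kedge n -> R)
    (phi : {ffun Kedge n -> R^o}) : Prop :=
  exists P : 'I_n -> {poly R},
    (forall v, (size (P v) <= r)%N) /\
    (forall (e : Kedge n) (v : 'I_n), v \in val e -> (P v).[c e] = phi e).

(* Main.v *)
Require Import Defs.
From HB Require Import structures.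
From mathcomp Require Import all_boot all_order all_algebra.
From mathcomp Require Import reals.
From mathcomp Require Import zify.
Local Open Scope ring_scope.
Set Implicit Arguments. Unset Strict Implicit.
Import GRing.Theory Num.Theory.

Section Aux.
Variable R : realType.

Lemma two_elems (T : finType) (e : {set T}) v :
  #|e| == 2%N -> v \in e -> exists w, w != v /\ e = [set v; w].
Proof.
case/cards2P=> [x [y [xy ->]]] /set2P [->|->].
  by exists y; split; rewrite // eq_sym.
by exists x; split; rewrite // setUC.
Qed.

Lemma sum2 (T : finType) (F : T -> R) x y : x != y ->
  \sum_(z in [set x; y]) F z = F x + F y.
Proof. by move=> xy; rewrite big_setU1 ?big_set1 // inE. Qed.

Lemma prod2 (T : finType) (F : T -> R) x y : x != y ->
  \prod_(z in [set x; y]) F z = F x * F y.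
Proof. by move=> xy; rewrite big_setU1 ?big_set1 // inE. Qed.

Definition Apol m (S : {set 'I_m}) : {poly R} :=
  \prod_(k <- enum (~: S)) ('X - ((k : nat)%:R)%:P).

Lemma Apol_eval m (S : {set 'I_m}) x :
  (Apol S).[x] = \prod_(k <- enum (~: S)) (x - (k : nat)%:R).
Proof. by rewrite /Apol horner_prod; apply: eq_bigr => k _; rewrite hornerXsubC. Qed.

Lemma Apol_size m (S : {set 'I_m}) : size (Apol S) = #|~: S|.+1.
Proof. by rewrite /Apol size_prod_XsubC cardE. Qed.

Lemma Apol_zero m (S : {set 'I_m}) (x : 'I_m) : x \notin S ->
  (Apol S).[(x : nat)%:R] = 0.
Proof.
move=> xS; apply/eqP; rewrite Apol_eval prodf_seq_eq0; apply/hasP.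
by exists x; rewrite ?mem_enum ?inE // subrr eqxx.
Qed.

Lemma Apol_nz m (S : {set 'I_m}) (x : 'I_m) : x \in S ->
  (Apol S).[(x : nat)%:R] != 0.
Proof.
move=> xS; rewrite Apol_eval prodf_seq_neq0; apply/allP => k.
rewrite mem_enum inE => kS /=; rewrite subr_eq0 eqr_nat.
by apply/negP => /eqP/val_inj xk; move: kS; rewrite -xk xS.
Qed.

End Aux.

Definition col (R : realType) n (e : Kedge n) : R := \sum_(x in val e) ((x : nat)%:R).

Definition phiS (R : realType) n m (S : {set 'I_m}) : {ffun Kedge n -> R^o} :=
  [ffun f : Kedge n => \prod_(x in val f) (Apol R S).[(x : nat)%:R]].

Lemma col_proper (R : realType) n : proper_coloring (@col R n).
Proof.
move=> e f ef /set0Pn [v]; rewrite inE => /andP [ve vf].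
have [a [av ea]] := two_elems (valP e) ve.
have [b [bv fb]] := two_elems (valP f) vf.
rewrite /col ea fb !sum2 1?eq_sym // => /addrI /eqP; rewrite eqr_nat => /eqP ab.
apply: ef; apply: val_inj; rewrite ea fb; congr [set _; _]; exact: val_inj.
Qed.

Lemma phiS_inW (R : realType) n r (S : {set 'I_r.+1}) : (0 < r)%N -> #|S| == 2%N ->
  inW r (@col R n) (@phiS R n _ S).
Proof.
move=> r0 S2.
exists (fun v : 'I_n => (Apol R S).[(v : nat)%:R] *: (Apol R S \Po ('X - ((v : nat)%:R)%:P))).
split.
  move=> v; apply: leq_trans (size_scale_leq _ _) _.
  rewrite size_comp_poly2 ?size_XsubC // Apol_size.
  have := cardsC S; rewrite card_ord (eqP S2); lia.
move=> e v ve; have [w [wv ew]] := two_elems (valP e) ve.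
rewrite ffunE hornerZ horner_comp hornerXsubC /col ew sum2 1?eq_sym //.
by rewrite prod2 1?eq_sym // addrC addKr.
Qed.

Lemma card_te n r (hn : (r.+1 <= n)%N) (S : {set 'I_r.+1}) :
  #|S| == 2%N -> #|widen_ord hn @: S| == 2%N.
Proof.
move=> S2; rewrite card_imset //.
move=> x y /(congr1 val) /= xy; exact: val_inj.
Qed.

Theorem lemma3p3 (R : realType) (n r : nat) :
  (0 < r)%N -> (r.+1 <= n)%N ->
  exists c : Kedge n -> R,
    proper_coloring c /\
    exists B : ('C(r.+1, 2)).-tuple {ffun Kedge n -> R^o},
      (forall phi, phi \in B -> inW r c phi) /\ free B.
Proof.
move=> r0 hn.
exists (@col R n); split; first exact: col_proper.
pose D := [set A : {set 'I_r.+1} | #|A| == 2%N].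
have hD : 'C(r.+1, 2) = #|D| by rewrite card_draws card_ord.
pose Sel (i : 'I_('C(r.+1, 2))) := enum_val (cast_ord hD i).
have Sel2 i : #|Sel i| == 2%N by have := enum_valP (cast_ord hD i); rewrite inE.
have Selinj : injective Sel.
  by move=> i j /enum_val_inj /cast_ord_inj.
pose te i : Kedge n := exist (fun e : {set 'I_n} => #|e| == 2%N) _ (card_te hn (Sel2 i)).
exists [tuple @phiS R n _ (Sel i) | i < 'C(r.+1, 2)]; split.
  move=> phi /mapP [i _ ->]; exact: phiS_inW.
apply/freeP => k hk i.
have := congr1 (fun f : {ffun Kedge n -> R^o} => f (te i)) hk.
have winj : {in Sel i &, injective (widen_ord hn)}.
  by move=> x y _ _ /(congr1 val) /= xy; apply: val_inj.
rewrite sum_ffunE (bigD1 i) // big1 => [|j ji]; rewrite ?nth_mktuple !ffunE /= big_imset //=.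
  rewrite addr0 => /eqP; rewrite mulf_eq0 => /orP [/eqP //|].
  move/prodf_eq0 => [x xS]; rewrite (negbTE (Apol_nz _ xS)) //.
have : ~~ (Sel i \subset Sel j).
  apply/negP => sij; move/eqP: ji; apply; apply: Selinj; apply/eqP.
  by rewrite eq_sym eqEcard sij (eqP (Sel2 i)) (eqP (Sel2 j)).
case/subsetPn => x xi xj.
rewrite (bigD1 x) //= Apol_zero // mul0r.
exact: mulr0.
Qed.
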